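(* Let $n\ge 2$, let $a_1,\dots,a_n$ be real numbers, and put $C(t)=\sum_{j=1}^n a_j\cos jt$, $S(t)=\sum_{j=1}^n a_j\sin jt$. Suppose $S(t_1)=0$ for some $t_1\in(0,\pi)$. Then there exist unique real numbers $a^{(1)}_1,\dots,a^{(1)}_{n-1}$ such that for all real $t$ $$S(t)=(\cos t-\cos t_1)\sum_{j=1}^{n-1}a^{(1)}_j\sin jt,\qquad C(t)=-\frac{a^{(1)}_1}{2}+(\cos t-\cos t_1)\sum_{j=1}^{n-1}a^{(1)}_j\cos jt .$$ *)

(* Defs.v *)
From Stdlib Require Export Reals Lra Lia.
Open Scope R_scope.

Fixpoint sum_range (m : nat) (f : nat -> R) : R :=
  match m with
  | O => 0
  | S k => sum_range k f + f (S k)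
  end.

Definition Ssum (n : nat) (a : nat -> R) (t : R) : R :=
  sum_range n (fun j => a j * sin (INR j * t)).

Definition Csum (n : nat) (a : nat -> R) (t : R) : R :=
  sum_range n (fun j => a j * cos (INR j * t)).

(* Main.v *)
Require Import Defs.
From Stdlib Require Import Reals Lra Lia.
Open Scope R_scope.

Lemma sum_ext m f f' : (forall j, (1 <= j <= m)%nat -> f j = f' j) -> sum_range m f = sum_range m f'.
Proof. induction m; intros H; cbn [sum_range]; [reflexivity|].
rewrite IHm by (intros; apply H; lia). rewrite (H (S m)) by lia. reflexivity. Qed.

Lemma sum_minus m f f' : sum_range m f - sum_range m f' = sum_range m (fun j => f j - f' j).
Proof. induction m; cbn [sum_range]; [ring|]. rewrite <- IHm; ring. Qed.

Lemma sum_zero m f : (forall j, (1 <= j <= m)%nat -> f j = 0) -> sum_range m f = 0.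
Proof. intros H; rewrite (sum_ext m f (fun _ => 0)) by exact H. clear H.
induction m; cbn [sum_range]; [ring|]. rewrite IHm; ring. Qed.

Definition Dop (c : R) (g : nat -> R) (k : nat) : R := (g (pred k) + g (S k)) / 2 - c * g k.

Lemma expand (c ct : R) (x : nat -> R)
  (Hx : forall k, x (S (S k)) + x k = 2 * ct * x (S k)) (g : nat -> R) : forall m,
  (ct - c) * sum_range m (fun j => g j * x j) =
  sum_range (S m) (fun k => Dop c g k * x k) - g 0%nat / 2 * x 1%nat + g 1%nat / 2 * x 0%nat
  - g (S m) / 2 * x m - g (S (S m)) / 2 * x (S m) + c * g (S m) * x (S m).
Proof.
induction m.
- cbn [sum_range]. unfold Dop. cbn [pred]. lra.
- cbn [sum_range] in *. rewrite Rmult_plus_distr_l, IHm. unfold Dop. cbn [pred].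
  assert (E : x (S (S m)) = 2 * ct * x (S m) - x m) by (rewrite <- (Hx m); ring).
  rewrite E. field.
Qed.

Lemma sin_rec t : forall k, sin (INR (S (S k)) * t) + sin (INR k * t) = 2 * cos t * sin (INR (S k) * t).
Proof. intros k.
replace (INR (S (S k)) * t) with (INR (S k) * t + t) by (rewrite (S_INR (S k)); ring).
replace (INR k * t) with (INR (S k) * t - t) by (rewrite (S_INR k); ring).
rewrite sin_plus, sin_minus; ring. Qed.

Lemma cos_rec t : forall k, cos (INR (S (S k)) * t) + cos (INR k * t) = 2 * cos t * cos (INR (S k) * t).
Proof. intros k.
replace (INR (S (S k)) * t) with (INR (S k) * t + t) by (rewrite (S_INR (S k)); ring).
replace (INR k * t) with (INR (S k) * t - t) by (rewrite (S_INR k); ring).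
rewrite cos_plus, cos_minus; ring. Qed.

Lemma comb e t h K : forall k,
  sum_range k (fun j => e j * cos (INR j * (t + h))) + sum_range k (fun j => e j * cos (INR j * (t - h)))
  - 2 * K * sum_range k (fun j => e j * cos (INR j * t))
  = sum_range k (fun j => 2 * e j * (cos (INR j * h) - K) * cos (INR j * t)).
Proof. induction k; cbn [sum_range]; [ring|]. rewrite <- IHk.
replace (INR (S k) * (t + h)) with (INR (S k) * t + INR (S k) * h) by ring.
replace (INR (S k) * (t - h)) with (INR (S k) * t - INR (S k) * h) by ring.
rewrite cos_plus, cos_minus; ring. Qed.

Lemma indep : forall m e e0, (forall t, e0 + sum_range m (fun j => e j * cos (INR j * t)) = 0) ->
  e0 = 0 /\ forall j, (1 <= j <= m)%nat -> e j = 0.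
Proof.
induction m; intros e e0 H.
- split. + specialize (H 0). cbn [sum_range] in H. lra. + intros; lia.
- set (h := PI / INR (S m)).
  assert (Hpos : 0 < INR (S m)) by (apply lt_0_INR; lia).
  assert (HK : cos (INR (S m) * h) = -1) by (unfold h; rewrite <- cos_PI; f_equal; field; lra).
  assert (Hc : forall j, (j <= m)%nat -> -1 < cos (INR j * h)).
  { intros j Hj. rewrite <- cos_PI. apply cos_decreasing_1.
    - unfold h. apply Rmult_le_pos; [apply pos_INR|]. apply Rlt_le, Rdiv_lt_0_compat; [apply PI_RGT_0|lra].
    - unfold h. assert (INR j < INR (S m)) by (apply lt_INR; lia).
      assert (0 < PI) by apply PI_RGT_0.
      apply Rlt_le. replace (INR j * (PI / INR (S m))) with (PI * (INR j / INR (S m))) by (field; lra).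
      rewrite <- (Rmult_1_r PI) at 2. apply Rmult_lt_compat_l; [lra|].
      apply Rmult_lt_reg_r with (INR (S m)); [lra|]. field_simplify; lra.
    - apply Rlt_le, PI_RGT_0.
    - lra.
    - unfold h. assert (INR j < INR (S m)) by (apply lt_INR; lia).
      assert (0 < PI) by apply PI_RGT_0.
      replace (INR j * (PI / INR (S m))) with (PI * (INR j / INR (S m))) by (field; lra).
      rewrite <- (Rmult_1_r PI) at 2. apply Rmult_lt_compat_l; [lra|].
      apply Rmult_lt_reg_r with (INR (S m)); [lra|]. field_simplify; lra. }
  destruct (IHm (fun j => 2 * e j * (cos (INR j * h) - cos (INR (S m) * h)))
                (2 * e0 * (1 - cos (INR (S m) * h)))) as [H0 Hj].
  { intros t. assert (E := comb e t h (cos (INR (S m) * h)) (S m)).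
    assert (E2 : sum_range (S m) (fun j => 2 * e j * (cos (INR j * h) - cos (INR (S m) * h)) * cos (INR j * t))
       = sum_range m (fun j => 2 * e j * (cos (INR j * h) - cos (INR (S m) * h)) * cos (INR j * t)))
      by (cbn [sum_range]; field).
    rewrite <- E2, <- E.
    assert (H1 := H (t + h)). assert (H2 := H (t - h)). assert (H3 := H t).
    set (A := sum_range (S m) (fun j => e j * cos (INR j * (t+h)))) in *.
    set (B := sum_range (S m) (fun j => e j * cos (INR j * (t-h)))) in *.
    set (C := sum_range (S m) (fun j => e j * cos (INR j * t))) in *.
    replace A with (-e0) by lra. replace B with (-e0) by lra. replace C with (-e0) by lra. field. }
  rewrite HK in H0. assert (E0 : e0 = 0) by lra.
  assert (Hj' : forall j, (1 <= j <= m)%nat -> e j = 0).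
  { intros j Hjm. specialize (Hj j Hjm). cbv beta in Hj. rewrite HK in Hj.
    specialize (Hc j ltac:(lia)).
    assert (Z : e j * (2 * (cos (INR j * h) + 1)) = 0) by (rewrite <- Hj; field).
    apply Rmult_integral in Z. destruct Z as [Z|Z]; [exact Z| lra]. }
  split; [exact E0|]. intros j Hjm.
  destruct (Nat.eq_dec j (S m)) as [->|Hne]; [|apply Hj'; lia].
  specialize (H 0). cbn [sum_range] in H. rewrite sum_zero in H.
  + rewrite Rmult_0_r, cos_0 in H. lra.
  + intros i Hi. rewrite Hj' by lia. ring.
Qed.

Fixpoint qq (a : nat -> R) (c : R) (n : nat) (i : nat) : R :=
  match i with
  | O => 0
  | S i' => 2 * (a (n - i')%nat + c * qq a c n i') -
            match i' with O => 0 | S i'' => qq a c n i'' end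
  end.

Theorem lemma2 (n : nat) (a : nat -> R) (t1 : R) :
  (2 <= n)%nat ->
  0 < t1 < PI ->
  Ssum n a t1 = 0 ->
  exists b : nat -> R,
    (forall t : R,
       Ssum n a t = (cos t - cos t1) * Ssum (n - 1) b t /\
       Csum n a t = - b 1%nat / 2 + (cos t - cos t1) * Csum (n - 1) b t) /\
    (forall b' : nat -> R,
       (forall t : R,
          Ssum n a t = (cos t - cos t1) * Ssum (n - 1) b' t /\
          Csum n a t = - b' 1%nat / 2 + (cos t - cos t1) * Csum (n - 1) b' t) ->
       forall j : nat, (1 <= j <= n - 1)%nat -> b' j = b j).
Proof.
intros Hn Ht1 HS.
set (c := cos t1).
destruct n as [|m]; [lia|].
replace (S m - 1)%nat with m by lia.
set (g := fun j => qq a c (S m) (S m - j)).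
assert (Hrec : forall k, (1 <= k <= S m)%nat -> a k = Dop c g k).
{ intros k Hk. unfold Dop, g.
  replace (S m - pred k)%nat with (S (S m - k)) by lia.
  replace (S m - S k)%nat with (pred (S m - k)) by lia.
  assert (Hk2 : (S m - (S m - k))%nat = k) by lia.
  remember (S m - k)%nat as i. clear Heqi.
  destruct i as [|i]; cbn [qq pred]; rewrite Hk2; field. }
assert (Hgn : g (S m) = 0) by (unfold g; rewrite Nat.sub_diag; reflexivity).
assert (HgSn : g (S (S m)) = 0) by (unfold g; replace (S m - S (S m))%nat with 0%nat by lia; reflexivity).
assert (Hsin0 : forall t, sin (INR 0 * t) = 0) by (intros; simpl INR; rewrite Rmult_0_l; apply sin_0).
assert (Hcos0 : forall t, cos (INR 0 * t) = 1) by (intros; simpl INR; rewrite Rmult_0_l; apply cos_0).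
assert (HSexp : forall t, (cos t - c) * Ssum m g t = Ssum (S m) a t - g 0%nat / 2 * sin t).
{ intros t. unfold Ssum. rewrite (expand c (cos t) (fun k => sin (INR k * t)) (sin_rec t) g m).
  rewrite Hgn, HgSn, Hsin0.
  rewrite (sum_ext (S m) (fun k => Dop c g k * sin (INR k * t)) (fun j => a j * sin (INR j * t)))
    by (intros; rewrite Hrec by lia; reflexivity).
  simpl (INR 1). rewrite Rmult_1_l. field. }
assert (Hg0 : g 0%nat = 0).
{ specialize (HSexp t1). rewrite HS in HSexp. fold c in HSexp.
  replace (c - c) with 0 in HSexp by field.
  assert (0 < sin t1) by (apply sin_gt_0; lra).
  assert (Z : g 0%nat * (sin t1 / 2) = 0) by (rewrite Rmult_0_l in HSexp; lra).
  apply Rmult_integral in Z. destruct Z; [assumption|lra]. }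
assert (HCexp : forall t, (cos t - c) * Csum m g t = Csum (S m) a t + g 1%nat / 2).
{ intros t. unfold Csum. rewrite (expand c (cos t) (fun k => cos (INR k * t)) (cos_rec t) g m).
  rewrite Hgn, HgSn, Hcos0, Hg0.
  rewrite (sum_ext (S m) (fun k => Dop c g k * cos (INR k * t)) (fun j => a j * cos (INR j * t)))
    by (intros; rewrite Hrec by lia; reflexivity).
  field. }
exists g. split.
- intros t. split.
  + rewrite HSexp, Hg0. field.
  + rewrite HCexp. field.
- intros b' Hb' j Hj.
  set (h := fun j => if (andb (Nat.leb 1 j) (Nat.leb j m)) then b' j else 0).
  assert (Hh : forall j, (1 <= j <= m)%nat -> h j = b' j).
  { intros i Hi. unfold h. replace (andb (Nat.leb 1 i) (Nat.leb i m)) with true; [reflexivity|].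
    symmetry. apply Bool.andb_true_iff. split; apply Nat.leb_le; lia. }
  assert (Hh0 : forall j, (j = 0 \/ m < j)%nat -> h j = 0).
  { intros i Hi. unfold h. replace (andb (Nat.leb 1 i) (Nat.leb i m)) with false; [reflexivity|].
    symmetry. apply Bool.andb_false_iff. destruct Hi; [left|right]; apply Nat.leb_gt; lia. }
  assert (HD : forall k, (1 <= k <= S m)%nat -> a k = Dop c h k).
  { assert (Hall : forall t, 0 + sum_range (S m) (fun k => (a k - Dop c h k) * cos (INR k * t)) = 0).
    { intros t. destruct (Hb' t) as [_ HC].
      assert (E : Csum m b' t = Csum m h t) by (apply sum_ext; intros; rewrite Hh by lia; reflexivity).
      rewrite E, <- (Hh 1%nat) in HC by lia. fold c in HC.
      unfold Csum in HC.
      rewrite (expand c (cos t) (fun k => cos (INR k * t)) (cos_rec t) h m) in HC.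
      rewrite (Hh0 0%nat), (Hh0 (S m)), (Hh0 (S (S m))), Hcos0 in HC by lia.
      rewrite (sum_ext (S m) (fun k => (a k - Dop c h k) * cos (INR k * t))
                          (fun k => a k * cos (INR k * t) - Dop c h k * cos (INR k * t)))
        by (intros; field).
      rewrite <- sum_minus. rewrite HC. field. }
    destruct (indep (S m) (fun k => a k - Dop c h k) 0 Hall) as [_ He].
    intros k Hk. specialize (He k Hk). cbv beta in He. lra. }
  assert (Hclaim : forall i, (i <= S m)%nat -> h (S m - i)%nat = g (S m - i)%nat /\
                                             h (S (S m) - i)%nat = g (S (S m) - i)%nat).
  { induction i; intros Hi.
    - rewrite !Nat.sub_0_r, Hgn, HgSn. split; apply Hh0; lia.
    - destruct (IHi ltac:(lia)) as [I1 I2].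
      set (k := (S m - i)%nat) in *.
      assert (Hk1 : (S (S m) - S i)%nat = k) by (unfold k; lia).
      assert (Hk2 : (S (S m) - i)%nat = S k) by (unfold k; lia).
      assert (Hk3 : (S m - S i)%nat = pred k) by (unfold k; lia).
      rewrite Hk1, Hk3. rewrite Hk2 in I2. split; [|exact I1].
      assert (E : Dop c h k = Dop c g k) by (rewrite <- HD, <- Hrec by (unfold k; lia); reflexivity).
      unfold Dop in E. rewrite I1, I2 in E. lra. }
  rewrite <- (Hh j) by lia.
  destruct (Hclaim (S m - j)%nat ltac:(lia)) as [C1 _].
  replace (S m - (S m - j))%nat with j in C1 by lia. exact C1.
Qed.
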